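(* Suppose $d=3$, let $D=\sum_{\rho\in\Sigma}n_\rho D_\rho$ with $(n_\rho)\in\mathbb{Z}^\Sigma$, and let $\Pi\subseteq\Sigma$. Then exactly one of the following holds: (i) $\tilde H^0(\Pi\cap\Xi;k)=0$ and the recession cone of the polyhedron $C_\Pi$ is $3$-dimensional; (ii) $\tilde H^0(\Pi\cap\Xi;k)\ne0$ and the set $C^{ss}_\Pi$ is either bounded or empty.
   Context: $k$ a field, $N\cong\mathbb{Z}^3$, $M=\operatorname{Hom}(N,\mathbb{Z})$, $\sigma\subset N_\mathbb{R}$ a strongly convex rational polyhedral cone of dimension $3$, $\Sigma=\sigma(1)$ its rays with primitive generators $n(\rho)$. $C_\Pi=\{m\in M_\mathbb{R}:\langle m,n(\rho)\rangle\le-n_\rho\ (\rho\in\Pi),\ \langle m,n(\rho)\rangle\ge-n_\rho\ (\rho\in\Sigma\setminus\Pi)\}$; $C^{ss}_\Pi$ is defined likewise but with strict inequality $<$ for $\rho\in\Pi$. The recession cone of $C_\Pi$ is the dual of $\sigma_\Pi=\operatorname{cone}(-n(\rho):\rho\in\Pi;\ n(\rho):\rho\notin\Pi)$. For $\Upsilon\subseteq\Sigma$, $\tau_\Upsilon$ is the minimal face of $\sigma$ whose rays contain $\Upsilon$; $\Xi=\{\Upsilon\subseteq\Sigma:\tau_\Upsilon\ne\sigma\}$ and $\Pi\cap\Xi=\{\Upsilon\in\Xi:\Upsilon\subseteq\Pi\}$. $\tilde H^j$ is reduced simplicial cohomology (augmented cochain complex, empty face in degree $-1$); by the paper's convention,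 for $\Pi=\emptyset$ all reduced cohomology of $\Pi\cap\Xi$ vanishes. *)

(* Defs.v *)
From HB Require Import structures.
From mathcomp Require Import all_boot all_order all_algebra.
From mathcomp Require Import reals.
Set Implicit Arguments. Unset Strict Implicit. Unset Printing Implicit Defensive.
Import Order.TTheory GRing.Theory Num.Theory.
Local Open Scope ring_scope.

(* N = Z^3 (integer row vectors), N_R = M_R = R^3 (real row vectors).
   The cone sigma is given by the list gens : 'I_r -> 'rV[int]_3 of the
   primitive generators n(rho) of its rays; Sigma = 'I_r. *)

Definition pairing (R : realType) (m : 'rV[R]_3) (v : 'rV[int]_3) : R :=
  \sum_(j < 3) m ord0 j * (v ord0 j)%:~R.

Definition in_cone (R : realType) r (gens : 'I_r -> 'rV[int]_3) (v : 'rV[R]_3) : Prop :=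
  exists lam : 'I_r -> R, (forall i, 0 <= lam i) /\
    v = \sum_(i < r) lam i *: map_mx (fun z : int => z%:~R) (gens i).

Definition rpair (R : realType) (m v : 'rV[R]_3) : R := \sum_(j < 3) m ord0 j * v ord0 j.

Definition in_dual (R : realType) r (gens : 'I_r -> 'rV[int]_3) (m : 'rV[R]_3) : Prop :=
  forall i, 0 <= pairing m (gens i).

Definition in_face (R : realType) r (gens : 'I_r -> 'rV[int]_3) (m v : 'rV[R]_3) : Prop :=
  in_cone gens v /\ rpair m v = 0.

Definition full_dim (R : realType) (C : 'rV[R]_3 -> Prop) : Prop :=
  exists A : 'M[R]_3, (forall i, C (row i A)) /\ \rank A = 3%N.

(* hypotheses: sigma = cone(gens) is a strongly convex rational polyhedral cone
   of dimension 3 whose rays are exactly the rays spanned by the gens (pairwise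
   distinct), each gens i being the primitive generator of its ray. *)
Definition ray_data (R : realType) r (gens : 'I_r -> 'rV[int]_3) : Prop :=
  [/\ (forall v : 'rV[R]_3, in_cone gens v -> in_cone gens (- v) -> v = 0),
      full_dim (@in_cone R r gens),
      (forall i, forall d : int, (forall j, (d %| gens i ord0 j)%Z) -> `|d| = 1),
      (forall i, exists m : 'rV[R]_3, in_dual gens m /\
          forall v, in_face gens m v <->
            exists t : R, 0 <= t /\ v = t *: map_mx (fun z : int => z%:~R) (gens i))
    & injective gens].

(* Upsilon in Xi: the minimal face tau_Upsilon of sigma whose rays contain
   Upsilon (the face sigma ∩ m^perp below) is different from sigma. *)
Definition in_Xi (R : realType) r (gens : 'I_r -> 'rV[int]_3) (U : {set 'I_r}) : Prop :=
  exists m : 'rV[R]_3,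
    [/\ in_dual gens m,
        (forall i, i \in U -> pairing m (gens i) = 0),
        (forall m' : 'rV[R]_3, in_dual gens m' ->
           (forall i, i \in U -> pairing m' (gens i) = 0) ->
           forall v, in_face gens m v -> in_face gens m' v)
      & exists v, in_cone gens v /\ ~ in_face gens m v].

Definition PiXi (R : realType) r (gens : 'I_r -> 'rV[int]_3) (Pi : {set 'I_r})
  (U : {set 'I_r}) : Prop := U \subset Pi /\ in_Xi R gens U.

(* augmented simplicial cochains with coefficients in k of a complex K on the
   ordered vertex set 'I_r: a j-cochain is (the restriction to faces of size
   j+1 of) a function {set 'I_r} -> k; the coboundary is the usual one. *)
Definition coboundary (k : fieldType) r (f : {set 'I_r} -> k) (S : {set 'I_r}) : k :=
  \sum_(i in S) (-1) ^+ #|[set x in S | (x < i)%N]| * f (S :\ i).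

(* reduced cohomology tilde H^j(K; k) = 0, for j >= -1 (faces of size j+1) *)
Definition reduced_cohom_zero (k : fieldType) r (K : {set 'I_r} -> Prop) (j : int) : Prop :=
  forall f : {set 'I_r} -> k,
    (forall S, K S -> Posz #|S| = j + 2 -> coboundary f S = 0) ->
    exists g : {set 'I_r} -> k,
      forall S, K S -> Posz #|S| = j + 1 -> f S = coboundary g S.

Definition C_Pi (R : realType) r (gens : 'I_r -> 'rV[int]_3) (nD : 'I_r -> int)
  (Pi : {set 'I_r}) (m : 'rV[R]_3) : Prop :=
  forall i, if i \in Pi then pairing m (gens i) <= - (nD i)%:~R
            else - (nD i)%:~R <= pairing m (gens i).

Definition Css_Pi (R : realType) r (gens : 'I_r -> 'rV[int]_3) (nD : 'I_r -> int)
  (Pi : {set 'I_r}) (m : 'rV[R]_3) : Prop :=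
  forall i, if i \in Pi then pairing m (gens i) < - (nD i)%:~R
            else - (nD i)%:~R <= pairing m (gens i).

(* the recession cone of C_Pi, i.e. the dual of
   sigma_Pi = cone(-n(rho) : rho in Pi; n(rho) : rho notin Pi) *)
Definition rec_cone_C_Pi (R : realType) r (gens : 'I_r -> 'rV[int]_3)
  (Pi : {set 'I_r}) (m : 'rV[R]_3) : Prop :=
  forall i, 0 <= pairing m (if i \in Pi then - gens i else gens i).

Definition bounded_set (R : realType) (C : 'rV[R]_3 -> Prop) : Prop :=
  exists B : R, forall m, C m -> forall j, `|m ord0 j| <= B.

Definition empty_set (R : realType) (C : 'rV[R]_3 -> Prop) : Prop :=
  forall m, ~ C m.

(* Main.v *)
Require Import Defs.
From HB Require Import structures.
From mathcomp Require Import all_boot all_order all_algebra.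
From mathcomp Require Import reals.
From mathcomp Require Import ring lra zify.
From Stdlib Require Import IndefiniteDescription Classical.
Set Implicit Arguments. Unset Strict Implicit. Unset Printing Implicit Defensive.
Import Order.TTheory GRing.Theory Num.Theory.
Local Open Scope ring_scope.
Lemma prim_int (ga gb : 'rV[int]_3) (j0 : 'I_3) :
  (forall d : int, (forall j, (d %| ga ord0 j)%Z) -> `|d| = 1) ->
  (forall d : int, (forall j, (d %| gb ord0 j)%Z) -> `|d| = 1) ->
  0 < ga ord0 j0 * gb ord0 j0 ->
  (forall j, gb ord0 j * ga ord0 j0 = ga ord0 j * gb ord0 j0) -> ga = gb.
Proof.
move=> pa pb xy0 rel.
set x := ga ord0 j0 in xy0 rel *; set y := gb ord0 j0 in xy0 rel *.
have [u [v Huv]] := Bezoutz x y.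
set g := gcdz x y in Huv.
have xn0 : x != 0 by apply/eqP => x0; rewrite x0 mul0r ltxx in xy0.
have gn0 : g != 0 by rewrite gcdz_eq0 negb_and xn0.
have [p Hp] : exists p, x = p * g by apply/dvdzP; apply: dvdz_gcdl.
have [q Hq] : exists q, y = q * g by apply/dvdzP; apply: dvdz_gcdr.
pose w j := u * ga ord0 j + v * gb ord0 j.
have ea j : ga ord0 j = p * w j.
  apply: (mulIf gn0).
  have h : x * w j - ga ord0 j * (u * x + v * y) = v * (gb ord0 j * x - ga ord0 j * y) by rewrite /w; ring.
  move: h; rewrite rel subrr mulr0 Huv => /eqP; rewrite subr_eq0 Hp => /eqP <-; ring.
have eb j : gb ord0 j = q * w j.
  apply: (mulIf gn0).
  have h : y * w j - gb ord0 j * (u * x + v * y) = u * (ga ord0 j * y - gb ord0 j * x) by rewrite /w; ring.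
  move: h; rewrite rel subrr mulr0 Huv => /eqP; rewrite subr_eq0 Hq => /eqP <-; ring.
have p1 : `|p| = 1 by apply: pa => j; rewrite ea dvdz_mulr.
have q1 : `|q| = 1 by apply: pb => j; rewrite eb dvdz_mulr.
have pq : p = q.
  have : 0 < p * q * (g * g) by move: xy0; rewrite Hp Hq; congr (0 < _); ring.
  rewrite pmulr_lgt0; last by clearbody g; move: gn0; nia.
  move: p1 q1; lia.
by apply/rowP => j; rewrite ea eb pq.
Qed.
Definition i1 : 'I_3 := @Ordinal 3 1 isT.
Definition i2 : 'I_3 := @Ordinal 3 2 isT.

Lemma sum3 (R : nmodType) (f : 'I_3 -> R) : \sum_(j < 3) f j = f ord0 + f i1 + f i2.
Proof.
rewrite !big_ord_recl big_ord0 addr0 addrA.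
by congr (_ + _ + _); congr f; apply/val_inj.
Qed.

Lemma ord3P (P : 'I_3 -> Prop) : P ord0 -> P i1 -> P i2 -> forall j, P j.
Proof.
move=> h0 h1 h2 [[|[|[|//]]] hj].
- by have -> : Ordinal hj = ord0 by apply/val_inj.
- by have -> : Ordinal hj = i1 by apply/val_inj.
- by have -> : Ordinal hj = i2 by apply/val_inj.
Qed.

Section Basics.
Variable R : realType.
Implicit Types (a b c d m v : 'rV[R]_3).

Definition vx v := v ord0 ord0.
Definition vy v := v ord0 i1.
Definition vz v := v ord0 i2.

Lemma rpairE m v : rpair m v = vx m * vx v + vy m * vy v + vz m * vz v.
Proof. by rewrite /rpair sum3. Qed.

Definition det3 a b c :=
  vx a * (vy b * vz c - vz b * vy c) - vy a * (vx b * vz c - vz b * vx c)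
  + vz a * (vx b * vy c - vy b * vx c).

Definition cross a b : 'rV[R]_3 :=
  \row_j (if j == ord0 then vy a * vz b - vz a * vy b
          else if j == i1 then vz a * vx b - vx a * vz b
          else vx a * vy b - vy a * vx b).

Lemma crossE a b :
  [/\ vx (cross a b) = vy a * vz b - vz a * vy b,
      vy (cross a b) = vz a * vx b - vx a * vz b &
      vz (cross a b) = vx a * vy b - vy a * vx b].
Proof. by rewrite /vx /vy /vz !mxE. Qed.

Lemma rpair_cross a b c : rpair (cross a b) c = det3 a b c.
Proof. case: (crossE a b) => e1 e2 e3; rewrite rpairE e1 e2 e3 /det3; ring. Qed.

Lemma ident4 m a b c d :
  det3 b c d * rpair m a - det3 a c d * rpair m b + det3 a b d * rpair m c
  - det3 a b c * rpair m d = 0.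
Proof. rewrite !rpairE /det3; ring. Qed.

Lemma identx m a b c :
  vx (cross b c) * rpair m a + vx (cross c a) * rpair m b + vx (cross a b) * rpair m c
  = det3 a b c * vx m.
Proof.
case: (crossE b c) => e1 _ _; case: (crossE c a) => f1 _ _; case: (crossE a b) => g1 _ _.
rewrite e1 f1 g1 !rpairE /det3; ring.
Qed.
Lemma identy m a b c :
  vy (cross b c) * rpair m a + vy (cross c a) * rpair m b + vy (cross a b) * rpair m c
  = det3 a b c * vy m.
Proof.
case: (crossE b c) => _ e1 _; case: (crossE c a) => _ f1 _; case: (crossE a b) => _ g1 _.
rewrite e1 f1 g1 !rpairE /det3; ring.
Qed.
Lemma identz m a b c :
  vz (cross b c) * rpair m a + vz (cross c a) * rpair m b + vz (cross a b) * rpair m c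
  = det3 a b c * vz m.
Proof.
case: (crossE b c) => _ _ e1; case: (crossE c a) => _ _ f1; case: (crossE a b) => _ _ g1.
rewrite e1 f1 g1 !rpairE /det3; ring.
Qed.

Lemma det3_cyc a b c : det3 a b c = det3 b c a.
Proof. rewrite /det3; ring. Qed.
Lemma det3_swap a b c : det3 a b c = - det3 b a c.
Proof. rewrite /det3; ring. Qed.
Lemma det3_aac a c : det3 a a c = 0.
Proof. rewrite /det3; ring. Qed.

Lemma rpairD m u v : rpair m (u + v) = rpair m u + rpair m v.
Proof. rewrite !rpairE /vx /vy /vz !mxE; ring. Qed.
Lemma rpairZ m t v : rpair m (t *: v) = t * rpair m v.
Proof. rewrite !rpairE /vx /vy /vz !mxE; ring. Qed.
Lemma rpairDl m1 m2 v : rpair (m1 + m2) v = rpair m1 v + rpair m2 v.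
Proof. rewrite !rpairE /vx /vy /vz !mxE; ring. Qed.
Lemma rpairZl t m v : rpair (t *: m) v = t * rpair m v.
Proof. rewrite !rpairE /vx /vy /vz !mxE; ring. Qed.
Lemma rpairN m v : rpair (- m) v = - rpair m v.
Proof. rewrite !rpairE /vx /vy /vz !mxE; ring. Qed.
Lemma rpair0 v : rpair 0 v = 0.
Proof. rewrite !rpairE /vx /vy /vz !mxE; ring. Qed.
Lemma rpair_sum (I : finType) (F : I -> 'rV[R]_3) m :
  rpair m (\sum_i F i) = \sum_i rpair m (F i).
Proof.
apply: (big_ind2 (fun x y => rpair m x = y)) => //.
  by rewrite rpairE /vx /vy /vz !mxE; ring.
by move=> x1 x2 y1 y2 <- <-; rewrite rpairD.
Qed.
Lemma rpair_suml (I : finType) (F : I -> 'rV[R]_3) v :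
  rpair (\sum_i F i) v = \sum_i rpair (F i) v.
Proof.
apply: (big_ind2 (fun x y => rpair x v = y)) => //.
  by rewrite rpair0.
by move=> x1 x2 y1 y2 <- <-; rewrite rpairDl.
Qed.

Lemma row3_eq0 m : vx m = 0 -> vy m = 0 -> vz m = 0 -> m = 0.
Proof. by move=> h0 h1 h2; apply/rowP; apply: ord3P; rewrite mxE. Qed.
End Basics.
Section Lin.
Variable R : realType.

Lemma rpairC (m v : 'rV[R]_3) : rpair m v = rpair v m.
Proof. rewrite !rpairE; ring. Qed.

Definition sel3 (T : Type) (w1 w2 w3 : T) (i : 'I_3) : T :=
  if i == ord0 then w1 else if i == i1 then w2 else w3.

Definition mk3 (w1 w2 w3 : 'rV[R]_3) : 'M[R]_3 := \matrix_(i, j) (sel3 w1 w2 w3 i) ord0 j.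

Lemma row_mk3 w1 w2 w3 i : row i (mk3 w1 w2 w3) = sel3 w1 w2 w3 i.
Proof. by apply/rowP => j; rewrite !mxE. Qed.

Lemma rank3 (w1 w2 w3 : 'rV[R]_3) : det3 w1 w2 w3 != 0 -> \rank (mk3 w1 w2 w3) = 3%N.
Proof.
move=> d0; apply: mxrank_unit; rewrite -row_free_unit; apply/row_freeP.
pose c := sel3 (cross w2 w3) (cross w3 w1) (cross w1 w2).
exists (\matrix_(j, k) ((c k) ord0 j / det3 w1 w2 w3)).
apply/matrixP => i k; rewrite !mxE.
under eq_bigr => j _ do rewrite !mxE mulrA.
rewrite -mulr_suml -/(rpair (sel3 w1 w2 w3 i) (c k)) rpairC.
have e : forall i k, rpair (c k) (sel3 w1 w2 w3 i) = if i == k then det3 w1 w2 w3 else 0.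
  apply: ord3P; apply: ord3P; rewrite /c /sel3 /= rpair_cross /det3; ring.
rewrite e; case: (i == k); [by rewrite divff | by rewrite mul0r].
Qed.

Lemma fin_eps (I : finType) (f : I -> R) : (forall i, 0 < f i) ->
  exists e, 0 < e /\ forall i, e <= f i.
Proof.
move=> hf.
suff [e [e0 he]] : exists e, 0 < e /\ forall i, i \in enum I -> e <= f i.
  by exists e; split => // i; apply: he; rewrite mem_enum.
elim: (enum I) => [|x s [e [e0 he]]]; first by exists 1.
exists (Num.min e (f x)); split; first by rewrite lt_min e0 hf.
move=> i; rewrite in_cons => /orP [/eqP ->|hi]; first by rewrite ge_min lexx orbT.
by rewrite ge_min he.
Qed.


Lemma hb1 (D L U x : R) : 0 < D -> L <= D * x -> x <= U -> `|x| <= `|L| / D + `|U|.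
Proof.
move=> D0 h1 h2.
have h3 : L / D <= x by rewrite ler_pdivrMr // mulrC.
have h4 : - (`|L| / D) <= L / D.
  rewrite -mulNr; apply: ler_wpM2r; first by rewrite invr_ge0 ltW.
  by rewrite lerNl -normrN ler_norm.
have h5 : 0 <= `|L| / D by rewrite divr_ge0 // ltW.
have h6 := ler_norm U. have h7 := normr_ge0 U.
rewrite ler_norml; apply/andP; split; lra.
Qed.

Lemma hb2 (D L U x : R) : 0 < D -> D * x <= U -> L <= x -> `|x| <= `|U| / D + `|L|.
Proof.
move=> D0 h1 h2; rewrite -normrN -(normrN U) -(normrN L); apply: hb1 => //.
  by rewrite mulrN lerN2.
by rewrite lerN2.
Qed.

Lemma hb3 (D al be ga x y z X Y Z w : R) : 0 < D -> `|x| <= X -> `|y| <= Y -> `|z| <= Z ->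
  al * x + be * y + ga * z = D * w -> `|w| <= (`|al| * X + `|be| * Y + `|ga| * Z) / D.
Proof.
move=> D0 hx hy hz e; rewrite ler_pdivlMr // mulrC.
rewrite -[X in X * `|w|](gtr0_norm D0) -normrM -e.
have t1 : `|al * x| <= `|al| * X by rewrite normrM; apply: ler_wpM2l.
have t2 : `|be * y| <= `|be| * Y by rewrite normrM; apply: ler_wpM2l.
have t3 : `|ga * z| <= `|ga| * Z by rewrite normrM; apply: ler_wpM2l.
have t4 := ler_normD (al * x) (be * y).
have t5 := ler_normD (al * x + be * y) (ga * z).
lra.
Qed.
End Lin.

Section Cob.
Variable k : fieldType.
Variable n : nat.

Lemma cob1 (f : {set 'I_n} -> k) x : coboundary f [set x] = f set0.
Proof.
rewrite /coboundary big_set1.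
have -> : [set y in [set x] | (y < x)%N] = set0.
  by apply/setP => y; rewrite !inE; case: eqP => // ->; rewrite ltnn.
by rewrite cards0 expr0 mul1r setDv.
Qed.

Lemma cob2 (f : {set 'I_n} -> k) (x y : 'I_n) : (x < y)%N ->
  coboundary f [set x; y] = f [set y] - f [set x].
Proof.
move=> xy.
have xny : x != y by apply/eqP => e; move: xy; rewrite e ltnn.
have nxy : x \notin [set y] by rewrite in_set1.
rewrite /coboundary big_setU1 //= big_set1.
have -> : [set z in [set x; y] | (z < x)%N] = set0.
  apply/setP => z; rewrite !inE; case: (eqVneq z x) => [->|zx]; first by rewrite ltnn.
  case: (eqVneq z y) => [->|zy] //=; by rewrite ltnNge ltnW.
have -> : [set z in [set x; y] | (z < y)%N] = [set x].
  apply/setP => z; rewrite !inE; case: (eqVneq z x) => [->|zx] //=.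
  by case: (eqVneq z y) => [->|zy] //=; rewrite ltnn.
have -> : [set x; y] :\ x = [set y].
  apply/setP => z; rewrite !inE; case: (eqVneq z x) => [->|zx] //=.
  by apply/esym/negbTE.
have -> : [set x; y] :\ y = [set x].
  apply/setP => z; rewrite !inE; case: (eqVneq z y) => [->|zy] /=.
    by apply/esym/negbTE; rewrite eq_sym.
  by rewrite orbF.
rewrite cards0 cards1 expr0 expr1 mul1r mulN1r; ring.
Qed.

End Cob.
Section Geo.
Variable R : realType.
Variable r : nat.
Variable gens : 'I_r -> 'rV[int]_3.
Hypothesis RD : ray_data R gens.

Definition N i : 'rV[R]_3 := map_mx (fun z : int => z%:~R) (gens i).

Lemma pairingE m i : pairing m (gens i) = rpair m (N i).
Proof. by apply: eq_bigr => j _; rewrite mxE. Qed.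

Lemma RDprim i d : (forall j, (d %| gens i ord0 j)%Z) -> `|d| = 1.
Proof. by case: RD => _ _ h _ _; apply: h. Qed.

Lemma RDinj : injective gens.
Proof. by case: RD. Qed.

Lemma mr_ex : exists mr : 'I_r -> 'rV[R]_3, forall i, in_dual gens (mr i) /\
  forall v, in_face gens (mr i) v <-> exists t : R, 0 <= t /\ v = t *: N i.
Proof. by case: RD => _ _ _ h _; exact: (@functional_choice _ _ _ h). Qed.

Definition mr : 'I_r -> 'rV[R]_3 := proj1_sig (constructive_indefinite_description _ mr_ex).
Lemma mrP i : in_dual gens (mr i) /\
  forall v, in_face gens (mr i) v <-> exists t : R, 0 <= t /\ v = t *: N i.
Proof. exact: (proj2_sig (constructive_indefinite_description _ mr_ex)). Qed.

Lemma mr_dual i j : 0 <= rpair (mr i) (N j).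
Proof. by case: (mrP i) => h _; rewrite -pairingE; apply: h. Qed.

Lemma N_cone i : in_cone gens (N i).
Proof.
exists (fun j => (j == i)%:R); split; first by move=> j; rewrite ler0n.
rewrite (bigD1 i) //= eqxx scale1r big1 ?addr0 // => j /negbTE ->.
by rewrite scale0r.
Qed.

Lemma mr_self i : rpair (mr i) (N i) = 0.
Proof.
case: (mrP i) => _ h.
by have [] := (proj2 (h (N i))) (ex_intro _ 1 (conj ler01 (esym (scale1r _)))).
Qed.

Lemma gens_neq0 i : gens i != 0.
Proof.
apply/eqP => h0.
have := @RDprim i 2.
have h : forall j, (2 %| gens i ord0 j)%Z by move=> j; rewrite h0 mxE dvdz0.
by move=> /(_ h).
Qed.

Lemma mr_pos i j : i != j -> 0 < rpair (mr i) (N j).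
Proof.
move=> ij; rewrite lt_def mr_dual andbT; apply/eqP => h.
case: (mrP i) => _ /(_ (N j)) [] /(_ (conj (N_cone j) h)) [t [t0 ht]] _.
have [j0 hj0] : exists j0, gens i ord0 j0 != 0.
  case: (pickP (fun j => gens i ord0 j != 0)) => [j0 hj0|hn]; first by exists j0.
  exfalso; move/negP: (gens_neq0 i); apply.
  by apply/eqP/rowP => k; rewrite mxE; move/negbFE/eqP: (hn k).
have co k : (gens j ord0 k)%:~R = t * (gens i ord0 k)%:~R :> R.
  by have := congr1 (fun v : 'rV[R]_3 => v ord0 k) ht; rewrite !mxE.
have tn0 : t != 0.
  apply/eqP => t0'; move: (gens_neq0 j); apply/negP/negPn; apply/eqP/rowP => k.
  by rewrite mxE; apply/eqP; rewrite -(eqr_int R) co t0' mul0r.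
have := @prim_int (gens i) (gens j) j0 (@RDprim i) (@RDprim j).
have pos : 0 < gens i ord0 j0 * gens j ord0 j0.
  rewrite -(ltr0z R) rmorphM /= co mulrCA -expr2 mulr_gt0 //.
    by rewrite lt_def tn0 t0.
  by rewrite exprn_even_gt0 //= intr_eq0.
move=> /(_ pos) h2.
have eqg : gens i = gens j.
  apply: h2 => k; apply: (@intr_inj R); rewrite !rmorphM /= !co; ring.
by move: ij; rewrite (RDinj eqg) eqxx.
Qed.


Lemma exists_notin (S : {set 'I_r}) : (#|S| < r)%N -> exists c, c \notin S.
Proof.
move=> hS; case: (pickP (fun c => c \notin S)) => [c hc|hn]; first by exists c.
exfalso; have : (#|'I_r| <= #|S|)%N.
  by apply: subset_leq_card; apply/subsetP => x _; move/negbFE: (hn x).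
by rewrite card_ord leqNgt hS.
Qed.

Lemma r3 : (2 < r)%N.
Proof.
case: RD => _ [A [hA rk]] _ _ _.
have [lam hl] : exists lam : 'I_3 -> 'I_r -> R, forall k,
    (forall i, 0 <= lam k i) /\ row k A = \sum_i lam k i *: N i.
  by apply: (@functional_choice _ _ _ hA).
pose G : 'M[R]_(r, 3) := \matrix_(i, j) N i ord0 j.
pose L : 'M[R]_(3, r) := \matrix_(k, i) lam k i.
have eA : A = L *m G.
  apply/row_matrixP => k; rewrite row_mul mulmx_sum_row (proj2 (hl k)).
  apply: eq_bigr => i _; rewrite /L /G !mxE; congr (_ *: _).
  by apply/rowP => j; rewrite !mxE.
have := mxrankM_maxr L G; rewrite -eA rk => h.
exact: (leq_trans h (rank_leq_row G)).
Qed.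

Definition m0 := \sum_i mr i.

Lemma m0_pos j : 0 < rpair m0 (N j).
Proof.
rewrite /m0 rpair_suml.
have [i0 hi] : exists i0, i0 \notin [set j].
  by apply: exists_notin; rewrite cards1; have := r3; lia.
rewrite (bigD1 i0) //=.
have h1 : 0 < rpair (mr i0) (N j) by apply: mr_pos; move: hi; rewrite in_set1.
have h2 : 0 <= \sum_(i < r | i != i0) rpair (mr i) (N j).
  by apply: sumr_ge0 => k _; apply: mr_dual.
lra.
Qed.

Lemma lemK a b c d (al be ga de : R) : a != d -> 0 < al -> 0 <= be -> 0 <= ga ->
  (forall m, al * rpair m (N a) + be * rpair m (N b) + ga * rpair m (N c)
             + de * rpair m (N d) = 0) -> False.
Proof.
move=> ad al0 be0 ga0 h.
case: (lerP 0 de) => de0.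
  have := h m0.
  have := mulr_gt0 al0 (m0_pos a); have := mulr_ge0 be0 (ltW (m0_pos b)).
  have := mulr_ge0 ga0 (ltW (m0_pos c)); have := mulr_ge0 de0 (ltW (m0_pos d)).
  lra.
have := h (mr d); rewrite mr_self mulr0 addr0.
have da : d != a by rewrite eq_sym.
have := mulr_gt0 al0 (@mr_pos d a da).
have := mulr_ge0 be0 (mr_dual d b); have := mulr_ge0 ga0 (mr_dual d c).
lra.
Qed.

Lemma lin3H a b c (al be ga : R) : a != b -> a != c -> 0 < al ->
  (forall m, al * rpair m (N a) + be * rpair m (N b) + ga * rpair m (N c) = 0) -> False.
Proof.
move=> ab ac al0 h.
case: (lerP 0 be) => be0.
  apply: (@lemK a b a c al be 0 ga ac al0 be0 (lexx 0)) => m.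
  by rewrite mul0r addr0 -(h m); ring.
case: (lerP 0 ga) => ga0.
  apply: (@lemK a c a b al ga 0 be ab al0 ga0 (lexx 0)) => m.
  by rewrite mul0r addr0 -(h m); ring.
apply: (@lemK b c b a (- be) (- ga) 0 (- al)); first by rewrite eq_sym.
- by rewrite oppr_gt0.
- by rewrite oppr_ge0 ltW.
- by [].
by move=> m; rewrite mul0r addr0 -[RHS]oppr0 -(h m); ring.
Qed.

Lemma lin3_0 a b c (al be ga : R) : a != b -> a != c ->
  (forall m, al * rpair m (N a) + be * rpair m (N b) + ga * rpair m (N c) = 0) -> al = 0.
Proof.
move=> ab ac h; case: (ltgtP al 0) => // hal.
  exfalso; apply: (@lin3H a b c (- al) (- be) (- ga) ab ac); first by rewrite oppr_gt0.
  by move=> m; rewrite -[RHS]oppr0 -(h m); ring.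
by exfalso; apply: (@lin3H a b c al be ga ab ac hal).
Qed.

Lemma lin3 a b c (al be ga : R) : a != b -> a != c -> b != c ->
  (forall m, al * rpair m (N a) + be * rpair m (N b) + ga * rpair m (N c) = 0) ->
  [/\ al = 0, be = 0 & ga = 0].
Proof.
move=> ab ac bc h; split.
- exact: (lin3_0 ab ac h).
- apply: (@lin3_0 b a c be al ga) => //; first by rewrite eq_sym.
  by move=> m; rewrite -(h m); ring.
- apply: (@lin3_0 c a b ga al be); try by rewrite eq_sym.
  by move=> m; rewrite -(h m); ring.
Qed.

Definition dt a b c := det3 (N a) (N b) (N c).

Lemma detN0 a b c : a != b -> a != c -> b != c -> dt a b c != 0.
Proof.
move=> ab ac bc; apply/eqP => h0.
have hx : forall m, vx (cross (N b) (N c)) * rpair m (N a) + vx (cross (N c) (N a)) * rpair m (N b)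
   + vx (cross (N a) (N b)) * rpair m (N c) = 0.
  by move=> m; rewrite identx -/(dt a b c) h0 mul0r.
have hy : forall m, vy (cross (N b) (N c)) * rpair m (N a) + vy (cross (N c) (N a)) * rpair m (N b)
   + vy (cross (N a) (N b)) * rpair m (N c) = 0.
  by move=> m; rewrite identy -/(dt a b c) h0 mul0r.
have hz : forall m, vz (cross (N b) (N c)) * rpair m (N a) + vz (cross (N c) (N a)) * rpair m (N b)
   + vz (cross (N a) (N b)) * rpair m (N c) = 0.
  by move=> m; rewrite identz -/(dt a b c) h0 mul0r.
have [_ _ cx] := lin3 ab ac bc hx.
have [_ _ cy] := lin3 ab ac bc hy.
have [_ _ cz] := lin3 ab ac bc hz.
case: (crossE (N a) (N b)) cx cy cz => -> -> -> cx cy cz.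
have ex : forall m, vx (N b) * rpair m (N a) + (- vx (N a)) * rpair m (N b) + 0 * rpair m (N c) = 0.
  move=> m; rewrite !rpairE.
  transitivity (- vy m * (vx (N a) * vy (N b) - vy (N a) * vx (N b))
                + vz m * (vz (N a) * vx (N b) - vx (N a) * vz (N b))); first by ring.
  by rewrite cz cy; ring.
have ey : forall m, vy (N b) * rpair m (N a) + (- vy (N a)) * rpair m (N b) + 0 * rpair m (N c) = 0.
  move=> m; rewrite !rpairE.
  transitivity (vx m * (vx (N a) * vy (N b) - vy (N a) * vx (N b))
                - vz m * (vy (N a) * vz (N b) - vz (N a) * vy (N b))); first by ring.
  by rewrite cz cx; ring.
have ez : forall m, vz (N b) * rpair m (N a) + (- vz (N a)) * rpair m (N b) + 0 * rpair m (N c) = 0.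
  move=> m; rewrite !rpairE.
  transitivity (- vx m * (vz (N a) * vx (N b) - vx (N a) * vz (N b))
                + vy m * (vy (N a) * vz (N b) - vz (N a) * vy (N b))); first by ring.
  by rewrite cy cx; ring.
have [bx _ _] := lin3 ab ac bc ex.
have [by' _ _] := lin3 ab ac bc ey.
have [bz _ _] := lin3 ab ac bc ez.
have := mr_pos ab; rewrite (row3_eq0 bx by' bz) rpairE /vx /vy /vz !mxE.
by rewrite !mulr0 !addr0 ltxx.
Qed.

Lemma cone_pair m v : in_cone gens v -> (forall j, rpair m (N j) = 0) -> rpair m v = 0.
Proof.
move=> [lam [_ ->]] h; rewrite rpair_sum big1 // => i _.
by rewrite rpairZ h mulr0.
Qed.

Lemma zeros2 m a b c : (forall i, 0 <= rpair m (N i)) -> a != b ->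
  rpair m (N a) = 0 -> rpair m (N b) = 0 -> (exists j, rpair m (N j) != 0) ->
  c != a -> c != b -> 0 < rpair m (N c).
Proof.
move=> hm ab ha hb [j hj] ca cb; rewrite lt_def hm andbT; apply/eqP => hc.
have ac : a != c by rewrite eq_sym.
have bc : b != c by rewrite eq_sym.
have dn := detN0 ab ac bc.
have e1 := identx m (N a) (N b) (N c).
have e2 := identy m (N a) (N b) (N c).
have e3 := identz m (N a) (N b) (N c).
rewrite ha hb hc !mulr0 !addr0 in e1 e2 e3.
move: e1 e2 e3 => /esym/eqP; rewrite mulf_eq0 (negbTE dn) /= => /eqP e1.
move=> /esym/eqP; rewrite mulf_eq0 (negbTE dn) /= => /eqP e2.
move=> /esym/eqP; rewrite mulf_eq0 (negbTE dn) /= => /eqP e3.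
by move: hj; rewrite (row3_eq0 e1 e2 e3) rpair0 eqxx.
Qed.

Lemma face_sub m m' (U : {set 'I_r}) v : (forall i, 0 <= rpair m (N i)) ->
  (forall i, i \notin U -> 0 < rpair m (N i)) -> (forall i, i \in U -> rpair m' (N i) = 0) ->
  in_face gens m v -> in_face gens m' v.
Proof.
move=> hm hpos hm' [[lam [l0 ev]] hv]; split; first by exists lam.
move: hv; rewrite ev !rpair_sum => hv.
have z := psumr_eq0P (fun i _ => mulr_ge0 (l0 i) (hm i)) (etrans (eq_bigr _ (fun i _ => esym (rpairZ _ _ _))) hv).
rewrite big1 // => i _; rewrite rpairZ.
case: (boolP (i \in U)) => hi; first by rewrite hm' // mulr0.
have := z i isT => /eqP; rewrite mulf_eq0 => /orP [/eqP -> | /eqP h].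
  by rewrite mul0r.
by have := hpos i hi; rewrite h ltxx.
Qed.

Lemma dt_aba a b : dt a b a = 0.
Proof. by rewrite /dt det3_cyc det3_cyc det3_aac. Qed.
Lemma dt_abb a b : dt a b b = 0.
Proof. by rewrite /dt det3_cyc det3_aac. Qed.

Lemma Xi_edge_sign a b c d : in_Xi R gens [set a; b] -> a != b ->
  c != a -> c != b -> d != a -> d != b -> 0 < dt a b c -> 0 < dt a b d.
Proof.
move=> [m [hd hU _ [v [hv hnf]]]] ab ca cb da db hc.
have hm i : 0 <= rpair m (N i) by rewrite -pairingE; apply: hd.
have ma : rpair m (N a) = 0 by rewrite -pairingE; apply: hU; rewrite in_set2 eqxx.
have mb : rpair m (N b) = 0 by rewrite -pairingE; apply: hU; rewrite in_set2 eqxx orbT.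
have nz : exists j, rpair m (N j) != 0.
  apply: NNPP => hn; apply: hnf; split => //; apply: cone_pair => // j.
  case: (boolP (rpair m (N j) == 0)) => [/eqP //|hj]; exfalso; apply: hn; by exists j.
have pc := zeros2 hm ab ma mb nz ca cb.
have pd := zeros2 hm ab ma mb nz da db.
have e := ident4 m (N a) (N b) (N c) (N d).
rewrite ma mb !mulr0 subr0 add0r in e.
have e' : dt a b d * rpair m (N c) = dt a b c * rpair m (N d) by apply/eqP; rewrite -subr_eq0; apply/eqP.
have : 0 < dt a b d * rpair m (N c) by rewrite e' mulr_gt0.
by rewrite pmulr_lgt0.
Qed.

Lemma edge_of a b : a != b -> (forall c, c != a -> c != b -> 0 < dt a b c) ->
  in_Xi R gens [set a; b].
Proof.
move=> ab hpos.
have pm i : pairing (cross (N a) (N b)) (gens i) = dt a b i by rewrite pairingE rpair_cross.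
have hm i : 0 <= rpair (cross (N a) (N b)) (N i).
  rewrite rpair_cross -/(dt a b i).
  case: (eqVneq i a) => [->|ia]; first by rewrite dt_aba.
  case: (eqVneq i b) => [->|ib]; first by rewrite dt_abb.
  by apply: ltW; apply: hpos.
exists (cross (N a) (N b)); split.
- by move=> i; rewrite pairingE.
- by move=> i; rewrite in_set2 pm => /orP [] /eqP ->; rewrite ?dt_aba ?dt_abb.
- move=> m' hd' hU' v; apply: (@face_sub _ _ [set a; b]) => //.
    move=> i; rewrite in_set2 negb_or => /andP [ia ib].
    by rewrite rpair_cross; apply: hpos.
  by move=> i hi; rewrite -pairingE; apply: hU'.
- have [c hc] : exists c, c \notin [set a; b].
    by apply: exists_notin; rewrite cards2 ab; have := r3; lia.
  exists (N c); split; first exact: N_cone.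
  move=> [_ h]; move: hc; rewrite in_set2 negb_or => /andP [ca cb].
  by have := hpos c ca cb; rewrite /dt -rpair_cross h ltxx.
Qed.

Lemma Xi_single a : in_Xi R gens [set a].
Proof.
exists (mr a); split.
- by case: (mrP a).
- by move=> i; rewrite in_set1 => /eqP ->; rewrite pairingE mr_self.
- move=> m' hd' hU' v; apply: (@face_sub _ _ [set a]).
  + exact: mr_dual.
  + by move=> i; rewrite in_set1 eq_sym; apply: mr_pos.
  + by move=> i hi; rewrite -pairingE; apply: hU'.
- have [c hc] : exists c, c \notin [set a] by apply: exists_notin; rewrite cards1; have := r3; lia.
  exists (N c); split; first exact: N_cone.
  move=> [_ h]; move: hc; rewrite in_set1 eq_sym => ac.
  by have := mr_pos ac; rewrite h ltxx.
Qed.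


Lemma dt_swap23 a b c : dt a b c = - dt a c b.
Proof. rewrite /dt /det3; ring. Qed.
Lemma dt_cyc a b c : dt a b c = dt b c a.
Proof. by rewrite /dt det3_cyc. Qed.
Lemma dt_aac a c : dt a a c = 0.
Proof. by rewrite /dt det3_aac. Qed.

Lemma lemT a x y z : x != a -> 0 < dt a x y -> 0 < dt a y z -> dt a x z < 0 -> False.
Proof.
move=> xa h1 h2 h3.
apply: (@lemK x y z a (dt a y z) (- dt a x z) (dt a x y) (- dt x y z) xa h2).
- by rewrite oppr_ge0 ltW.
- exact: ltW.
move=> m; rewrite -[RHS]oppr0 -(ident4 m (N a) (N x) (N y) (N z)) /dt; ring.
Qed.

Lemma lemO a x y z : a != y -> 0 < dt a x y -> 0 < dt a y z -> 0 < dt a x z ->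
  dt x y z < 0 -> False.
Proof.
move=> ay h1 h2 h3 h4.
apply: (@lemK a x z y (- dt x y z) (dt a y z) (dt a x y) (- dt a x z) ay).
- by rewrite oppr_gt0.
- exact: ltW.
- exact: ltW.
move=> m; rewrite -[RHS]oppr0 -(ident4 m (N a) (N x) (N y) (N z)) /dt; ring.
Qed.

Lemma dt_neq_lt a b c : a != b -> a != c -> b != c -> dt a b c < 0 \/ 0 < dt a b c.
Proof.
move=> ab ac bc; have := detN0 ab ac bc.
by case: (ltgtP (dt a b c) 0) => // _ _; [left|right].
Qed.

Section Ord.
Variable a0 : 'I_r.

Definition lt0 x y := (x != y) && ((x == a0) || ((y != a0) && (0 < dt a0 x y))).

Lemma lt0_total x y : x != y -> lt0 x y || lt0 y x.
Proof.
move=> xy; have yx : y != x by rewrite eq_sym.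
case: (eqVneq x a0) => [xa|xa].
  by apply/orP; left; rewrite /lt0; apply/andP; split; [exact: xy | rewrite xa ?eqxx].
case: (eqVneq y a0) => [ya|ya].
  by apply/orP; right; rewrite /lt0; apply/andP; split; [exact: yx | rewrite ya ?eqxx].
have ax : a0 != x by rewrite eq_sym.
have ay : a0 != y by rewrite eq_sym.
have [h|h] := dt_neq_lt ax ay xy; apply/orP; rewrite /lt0.
  right; apply/andP; split; first exact: yx.
  by apply/orP; right; apply/andP; split; [exact: xa | rewrite dt_swap23 oppr_gt0 h].
left; apply/andP; split; first exact: xy.
by apply/orP; right; apply/andP; split; [exact: ya | exact: h].
Qed.

Lemma lt0P x y : lt0 x y -> x != y /\ (x = a0 \/ (x != a0 /\ y != a0 /\ 0 < dt a0 x y)).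
Proof.
rewrite /lt0 => /andP [h /orP [/eqP e|/andP [p q]]]; split => //; first by left.
case: (eqVneq x a0) => [e|xa]; [by left | by right].
Qed.

Lemma lt0_dt x y z : lt0 x y -> lt0 y z -> 0 < dt x y z.
Proof.
move=> /lt0P [xy [xa|[xa [ya dxy]]]] /lt0P [yz [ya2|[ya' [za dyz]]]].
- by move: xy; rewrite xa ya2 eqxx.
- by rewrite xa.
- by move: ya; rewrite ya2 eqxx.
have xz : x != z.
  apply/eqP => exz; move: dyz; rewrite -exz dt_swap23 oppr_gt0 => h.
  by have := lt_trans h dxy; rewrite ltxx.
have dxz : 0 < dt a0 x z.
  have ax : a0 != x by rewrite eq_sym.
  have az : a0 != z by rewrite eq_sym.
  have [h|//] := dt_neq_lt ax az xz; exfalso; exact: (lemT xa dxy dyz h).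
have [h|//] := dt_neq_lt xy xz yz; exfalso.
by apply: (lemO _ dxy dyz dxz h); rewrite eq_sym.
Qed.

Lemma lt0_trans x y z : lt0 x y -> lt0 y z -> lt0 x z.
Proof.
move=> /lt0P [xy [xa|[xa [ya dxy]]]] /lt0P [yz [ya2|[ya' [za dyz]]]].
- by move: xy; rewrite xa ya2 eqxx.
- rewrite /lt0; apply/andP; split; last by rewrite xa ?eqxx.
  by rewrite xa eq_sym.
- by move: ya; rewrite ya2 eqxx.
have xz : x != z.
  apply/eqP => exz; move: dyz; rewrite -exz dt_swap23 oppr_gt0 => h.
  by have := lt_trans h dxy; rewrite ltxx.
have dxz : 0 < dt a0 x z.
  have ax : a0 != x by rewrite eq_sym.
  have az : a0 != z by rewrite eq_sym.
  have [h|//] := dt_neq_lt ax az xz; exfalso; exact: (lemT xa dxy dyz h).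
rewrite /lt0; apply/andP; split; first exact: xz.
by apply/orP; right; apply/andP; split; [exact: za | exact: dxz].
Qed.

Lemma lt0_irr x : ~~ lt0 x x.
Proof. by rewrite /lt0 eqxx. Qed.

Definition pos x := #|[set y | lt0 y x]|.

Lemma pos_lt x y : lt0 x y -> (pos x < pos y)%N.
Proof.
move=> hxy; apply: proper_card; apply/properP; split.
  by apply/subsetP => w; rewrite !inE => hw; apply: lt0_trans hxy.
by exists x; rewrite !inE // lt0_irr.
Qed.

Lemma pos_inj : injective pos.
Proof.
move=> x y e; apply/eqP; apply: contraT => xy.
case/orP: (lt0_total xy) => h; have := pos_lt h; rewrite e ltnn //.
Qed.

Lemma pos_ltr x : (pos x < r)%N.
Proof.
rewrite -[r]card_ord; apply: proper_card; apply/properP; split; first exact: subset_predT.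
by exists x => //; rewrite !inE lt0_irr.
Qed.

Lemma pos_ltP x y : lt0 x y = (pos x < pos y)%N.
Proof.
apply/idP/idP; first exact: pos_lt.
move=> h; case: (eqVneq x y) => [exy|xy]; first by move: h; rewrite exy ltnn.
case/orP: (lt0_total xy) => // hyx; have := pos_lt hyx; lia.
Qed.

Lemma pos_a0 : pos a0 = 0%N.
Proof.
apply/eqP; rewrite cards_eq0; apply/eqP/setP => y; rewrite !inE /lt0.
by case: (eqVneq y a0) => [->|ya] /=; rewrite ?eqxx //= eqxx andbF.
Qed.

Definition posO x : 'I_r := Ordinal (pos_ltr x).

Lemma elt_ex : exists elt : 'I_r -> 'I_r, forall k, pos (elt k) = k.
Proof.
have : injective posO by move=> x y /(congr1 val) /= /pos_inj.
move/injF_bij => [g _ hg]; exists g => k.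
by have := hg k; move/(congr1 val).
Qed.

Definition cyc (i j k : nat) := [|| (i < j < k)%N, (j < k < i)%N | (k < i < j)%N].

Lemma dt_sign x y z :
  (cyc (pos x) (pos y) (pos z) /\ 0 < dt x y z) \/
  (cyc (pos x) (pos z) (pos y) /\ dt x y z < 0) \/
  ((pos x = pos y \/ pos y = pos z \/ pos x = pos z) /\ dt x y z = 0).
Proof.
case: (eqVneq x y) => [<-|xy]; first by right; right; split; [left|rewrite dt_aac].
case: (eqVneq y z) => [<-|yz]; first by right; right; split; [right;left|rewrite dt_abb].
case: (eqVneq x z) => [<-|xz]; first by right; right; split; [right;right|rewrite dt_aba].
have px : pos x != pos y by apply: contra xy => /eqP /pos_inj ->.
have py : pos y != pos z by apply: contra yz => /eqP /pos_inj ->.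
have pz : pos x != pos z by apply: contra xz => /eqP /pos_inj ->.
have P1 u v w : (pos u < pos v < pos w)%N -> 0 < dt u v w.
  by case/andP; rewrite -!pos_ltP; apply: lt0_dt.
rewrite /cyc.
have [h|h] : [|| (pos x < pos y < pos z)%N, (pos y < pos z < pos x)%N | (pos z < pos x < pos y)%N] \/
          [|| (pos x < pos z < pos y)%N, (pos z < pos y < pos x)%N | (pos y < pos x < pos z)%N].
  by move: px py pz; lia.
- left; split => //; case/or3P: h => h.
  + exact: P1.
  + by rewrite dt_cyc; apply: P1.
  + by rewrite dt_cyc dt_cyc; apply: P1.
- right; left; split => //; rewrite dt_swap23 oppr_lt0; case/or3P: h => h.
  + exact: P1.
  + by rewrite dt_cyc; apply: P1.
  + by rewrite dt_cyc dt_cyc; apply: P1.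
Qed.

End Ord.

Lemma pairingN (m : 'rV[R]_3) (g : 'rV[int]_3) : pairing m (- g) = - pairing m g.
Proof.
rewrite /pairing -sumrN; apply: eq_bigr => j _; rewrite mxE mulrNz; ring.
Qed.

Lemma rpair_delta (v : 'rV[R]_3) j : rpair (delta_mx ord0 j : 'rV[R]_3) v = v ord0 j.
Proof.
move: j; apply: ord3P; rewrite rpairE /vx /vy /vz !mxE /=; ring.
Qed.

Section Main.
Variable Pi : {set 'I_r}.

Definition beta := exists a b c d, [/\ a \in Pi, c \in Pi, b \notin Pi, d \notin Pi &
  [/\ 0 < dt b c d, 0 < dt a c d, 0 < dt a b d & 0 < dt a b c]].

Definition alpha := exists u : 'rV[R]_3, forall i,
  (i \in Pi -> rpair u (N i) < 0) /\ (i \notin Pi -> 0 < rpair u (N i)).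

Lemma L4 : alpha -> full_dim (@rec_cone_C_Pi R r gens Pi).
Proof.
move=> [u hu].
have hpos : forall p : 'I_r * 'I_3, 0 < `|rpair u (N p.1)| / (1 + `|N p.1 ord0 p.2|).
  move=> [i j] /=; apply: divr_gt0; last by have := normr_ge0 (N i ord0 j); lra.
  rewrite normr_gt0; case: (boolP (i \in Pi)) => hi.
    by rewrite lt_eqF // (proj1 (hu i)).
  by rewrite gt_eqF // (proj2 (hu i)).
have [e [e0 he]] := fin_eps hpos.
set s := vx u + vy u + vz u.
have [e' [e'0 e'le e'ne]] : exists e', [/\ 0 < e', e' <= e & e' + s != 0].
  case: (eqVneq (e + s) 0) => h; last by exists e.
  exists (e / 2); split; [by lra | by lra | ].
  apply/eqP => h2; lra.
pose w j := u + e' *: (delta_mx ord0 j : 'rV[R]_3).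
have hw j : @rec_cone_C_Pi R r gens Pi (w j).
  move=> i; have := he (i, j); rewrite /= ler_pdivlMr; last by have := normr_ge0 (N i ord0 j); lra.
  set x := rpair u (N i); set t := N i ord0 j => h1.
  have P2 : e' * t <= e' * `|t| by apply: ler_wpM2l; [exact: ltW | exact: ler_norm].
  have P3 : e' * `|t| <= e * `|t| by apply: ler_wpM2r; [exact: normr_ge0 | exact: e'le].
  have et : e * (1 + `|t|) = e + e * `|t| by ring.
  rewrite et in h1.
  case: ifP => hi; rewrite ?pairingN pairingE rpairDl rpairZl rpair_delta -/x -/t.
    have := proj1 (hu i) hi; rewrite -/x => hx; rewrite (ltr0_norm hx) in h1; lra.
  have := proj2 (hu i) (negbT hi); rewrite -/x => hx; rewrite (gtr0_norm hx) in h1.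
  have P4 : - (e' * `|t|) <= e' * t.
    rewrite -mulrN; apply: ler_wpM2l; first exact: ltW.
    by rewrite lerNl -normrN ler_norm.
  lra.
exists (mk3 (w ord0) (w i1) (w i2)); split.
  by move=> i; rewrite row_mk3; move: i; apply: ord3P; apply: hw.
apply: rank3.
have -> : det3 (w ord0) (w i1) (w i2) = e' ^+ 2 * (e' + s).
  rewrite /det3 /w /s /vx /vy /vz !mxE /=; ring.
by rewrite mulf_neq0 // expf_neq0 // gt_eqF.
Qed.


Lemma L2 (nD : 'I_r -> int) : beta -> bounded_set (@Css_Pi R r gens nD Pi).
Proof.
move=> [a [b [c [d [ha hc hb hd [D1 D2 D3 D4]]]]]].
set na : R := (nD a)%:~R; set nb : R := (nD b)%:~R.
set nc : R := (nD c)%:~R; set nd : R := (nD d)%:~R.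
set La := dt a c d * (- nb) - dt a b d * (- nc) + dt a b c * (- nd).
set Ub := dt b c d * (- na) + dt a b d * (- nc) - dt a b c * (- nd).
set Lc := dt a c d * (- nb) + dt a b c * (- nd) - dt b c d * (- na).
set Ba := `|La| / dt b c d + `|- na|.
set Bb := `|Ub| / dt a c d + `|- nb|.
set Bc := `|Lc| / dt a b d + `|- nc|.
pose cf (p : 'rV[R]_3 -> R) := (`|p (cross (N b) (N c))| * Ba + `|p (cross (N c) (N a))| * Bb
   + `|p (cross (N a) (N b))| * Bc) / dt a b c.
exists (cf (@vx R) + cf (@vy R) + cf (@vz R)) => m hm.
have hma : rpair m (N a) < - na by have := hm a; rewrite ha pairingE.
have hmc : rpair m (N c) < - nc by have := hm c; rewrite hc pairingE.
have hmb : - nb <= rpair m (N b) by have := hm b; rewrite (negbTE hb) pairingE.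
have hmd : - nd <= rpair m (N d) by have := hm d; rewrite (negbTE hd) pairingE.
have rel := ident4 m (N a) (N b) (N c) (N d).
rewrite -!/(dt _ _ _) in rel.
set ma := rpair m (N a) in hma rel *; set mb := rpair m (N b) in hmb rel *.
set mc := rpair m (N c) in hmc rel *; set md := rpair m (N d) in hmd rel *.
have s2 : dt a c d * (- nb) <= dt a c d * mb by apply: ler_wpM2l; [exact: ltW|].
have s3 : dt a b d * mc <= dt a b d * (- nc) by apply: ler_wpM2l; [exact: ltW| exact: ltW].
have s4 : dt a b c * (- nd) <= dt a b c * md by apply: ler_wpM2l; [exact: ltW|].
have s1 : dt b c d * ma <= dt b c d * (- na) by apply: ler_wpM2l; [exact: ltW| exact: ltW].
have bma : `|ma| <= Ba.
  apply: hb1 => //; last exact: ltW.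
  rewrite /La; lra.
have bmb : `|mb| <= Bb.
  apply: hb2 => //; rewrite /Ub; lra.
have bmc : `|mc| <= Bc.
  apply: hb1 => //; last exact: ltW.
  rewrite /Lc; lra.
have bx : `|vx m| <= cf (@vx R) by apply: hb3 D4 bma bmb bmc _; rewrite identx.
have by' : `|vy m| <= cf (@vy R) by apply: hb3 D4 bma bmb bmc _; rewrite identy.
have bz : `|vz m| <= cf (@vz R) by apply: hb3 D4 bma bmb bmc _; rewrite identz.
have := normr_ge0 (vx m); have := normr_ge0 (vy m); have := normr_ge0 (vz m).
move=> n1 n2 n3; apply: ord3P; rewrite -?/(vx m) -?/(vy m) -?/(vz m); lra.
Qed.

Lemma pos_neq a0 x y : x != y -> pos a0 x != pos a0 y.
Proof. by apply: contra => /eqP /pos_inj ->. Qed.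

Lemma pos_gt0 a0 x : x != a0 -> (0 < pos a0 x)%N.
Proof. by move=> h; have := pos_neq a0 h; rewrite pos_a0 lt0n. Qed.

Lemma S2 a0 x y z : (pos a0 x < pos a0 y)%N ->
  (pos a0 z < pos a0 x)%N \/ (pos a0 y < pos a0 z)%N -> 0 < dt x y z.
Proof.
move=> hxy [h|h].
  by rewrite dt_cyc dt_cyc; apply: (@lt0_dt a0); rewrite pos_ltP.
by apply: (@lt0_dt a0); rewrite pos_ltP.
Qed.

Lemma S1 a0 x y z : (pos a0 x < pos a0 z)%N -> (pos a0 z < pos a0 y)%N -> dt x y z < 0.
Proof.
move=> h1 h2; rewrite dt_swap23 oppr_lt0.
by apply: (@lt0_dt a0); rewrite pos_ltP.
Qed.

Lemma W1 a0 x y z : (pos a0 x <= pos a0 z)%N -> (pos a0 z <= pos a0 y)%N -> dt x y z <= 0.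
Proof.
move=> h1 h2.
case: (eqVneq z x) => [->|zx]; first by rewrite dt_aba.
case: (eqVneq z y) => [->|zy]; first by rewrite dt_abb.
apply: ltW; apply: (@S1 a0).
  by rewrite ltn_neqAle h1 andbT eq_sym; apply: pos_neq.
by rewrite ltn_neqAle h2 andbT; apply: pos_neq.
Qed.

Lemma W2 a0 x y z : (pos a0 x <= pos a0 y)%N ->
  (pos a0 z <= pos a0 x)%N \/ (pos a0 y <= pos a0 z)%N -> 0 <= dt x y z.
Proof.
move=> hxy h.
case: (eqVneq z x) => [->|zx]; first by rewrite dt_aba.
case: (eqVneq z y) => [->|zy]; first by rewrite dt_abb.
case: (eqVneq x y) => [->|xy]; first by rewrite dt_aac.
have p1 := pos_neq a0 zx; have p2 := pos_neq a0 zy; have p3 := pos_neq a0 xy.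
apply: ltW; apply: (@S2 a0); first by rewrite ltn_neqAle p3.
by case: h => h; [left|right]; rewrite ltn_neqAle h andbT // eq_sym.
Qed.

Lemma dt_swap12 a b c : dt a b c = - dt b a c.
Proof. by rewrite /dt det3_swap. Qed.

Lemma edge_dir b d i j : in_Xi R gens [set i; j] -> i != j -> b != d ->
  i != b -> i != d -> j != b -> j != d -> 0 < dt b d i -> 0 < dt b d j.
Proof.
move=> hX ij bd ib id jb jd H.
have E2 : 0 < dt i j d -> 0 < dt i j b.
  by apply: Xi_edge_sign => //; rewrite eq_sym.
have db : d != b by rewrite eq_sym.
have pd := pos_gt0 db; have pi := pos_gt0 ib; have pj := pos_gt0 jb.
have hpb := pos_a0 b.
have n1 := pos_neq b id; have n2 := pos_neq b jd; have n3 := pos_neq b ij.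
have hDI : (pos b d < pos b i)%N.
  rewrite ltn_neqAle eq_sym n1 /= leqNgt; apply/negP => hid.
  have := S1 (a0 := b) (x := b) (y := d) (z := i); rewrite hpb => /(_ pi hid); lra.
case: (ltngtP (pos b d) (pos b j)) => hdj.
- by apply: (S2 (a0 := b)); rewrite hpb //; right.
- exfalso.
  have h1 : 0 < dt j i b.
    by apply: (S2 (a0 := b)); [lia | left; rewrite hpb].
  have h2 : dt j i d < 0 by apply: (S1 (a0 := b)).
  have := E2; rewrite dt_swap12 (dt_swap12 i j b); lra.
- by move: n2; rewrite hdj eqxx.
Qed.

Lemma edge_same b d i j : in_Xi R gens [set i; j] -> i != j -> b != d ->
  i != b -> i != d -> j != b -> j != d -> (0 < dt b d i) = (0 < dt b d j).
Proof.
move=> hX ij bd ib id jb jd; apply/idP/idP; first exact: edge_dir.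
apply: edge_dir => //; first by rewrite setUC.
by rewrite eq_sym.
Qed.

Lemma L1 (k : fieldType) : beta -> ~ reduced_cohom_zero k (PiXi R gens Pi) 0.
Proof.
move=> [a [b [c [d [ha hc hb hd [D1 D2 D3 D4]]]]]] hA.
pose f (X : {set 'I_r}) : k := if [exists i in X, 0 < dt b d i] then 1 else 0.
have fs i : f [set i] = if 0 < dt b d i then 1 else 0.
  rewrite /f; congr (if _ then _ else _); apply/existsP/idP => [[j /andP [/set1P -> h]] // | h].
  by exists i; rewrite in_set1 eqxx h.
have bd : b != d.
  by apply/eqP => e; move: D1; rewrite e dt_aba ltxx.
have key : forall S', PiXi R gens Pi S' -> Posz #|S'| = 0 + 2 -> coboundary f S' = 0.
  move=> S' [sub hX]; rewrite add0r => -[] /eqP /cards2P [i [j [ij eS]]].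
  have hi : i \in Pi by apply: (subsetP sub); rewrite eS in_set2 eqxx.
  have hj : j \in Pi by apply: (subsetP sub); rewrite eS in_set2 eqxx orbT.
  have ne x y : x \in Pi -> y \notin Pi -> x != y by move=> hx hy; apply: contraNneq hy => <-.
  have hX' : in_Xi R gens [set i; j] by rewrite -eS.
  have same := edge_same hX' ij bd (ne _ _ hi hb) (ne _ _ hi hd) (ne _ _ hj hb) (ne _ _ hj hd).
  rewrite eS; case: (ltngtP i j) => hij.
  - by rewrite cob2 // !fs same subrr.
  - by rewrite setUC cob2 // !fs same subrr.
  - by move: ij; rewrite (val_inj hij) eqxx.
have [g hg] := hA f key.
have sa : PiXi R gens Pi [set a] by split; [rewrite sub1set | exact: Xi_single].
have sc : PiXi R gens Pi [set c] by split; [rewrite sub1set | exact: Xi_single].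
have e1 : f [set a] = coboundary g [set a] by apply: hg => //; rewrite cards1.
have e2 : f [set c] = coboundary g [set c] by apply: hg => //; rewrite cards1.
rewrite cob1 fs in e1; rewrite cob1 fs in e2.
have pa : 0 < dt b d a by rewrite -dt_cyc.
have nc : ~~ (0 < dt b d c) by rewrite dt_swap23 oppr_gt0 -leNgt ltW.
move: e1 e2; rewrite pa (negbTE nc) => e1 e2.
by move/eqP: (@oner_neq0 k); rewrite e1 e2.
Qed.

Lemma interval a0 : a0 \notin Pi -> ~ beta -> forall x y z, x \in Pi -> z \in Pi ->
  (pos a0 x < pos a0 y)%N -> (pos a0 y < pos a0 z)%N -> y \in Pi.
Proof.
move=> ha0 nb x y z hx hz hxy hyz; apply: contraT => hy; exfalso; apply: nb.
have xa : x != a0 by apply: contraNneq ha0 => <-.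
have px := pos_gt0 xa; have p0 := pos_a0 a0.
exists x, y, z, a0; split => //; split.
- by apply: (@S2 a0) => //; left; rewrite p0; lia.
- by apply: (@S2 a0) => //; [lia | left; rewrite p0].
- by apply: (@S2 a0) => //; left; rewrite p0.
- by apply: (@S2 a0) => //; right.
Qed.

Lemma CE a0 x y : (pos a0 y).+1 = pos a0 x -> in_Xi R gens [set y; x].
Proof.
move=> h.
have yx : y != x by apply/eqP => e; move: h; rewrite e; lia.
apply: edge_of => // c cy cx.
have n1 := pos_neq a0 cy; have n2 := pos_neq a0 cx.
by apply: (@S2 a0); lia.
Qed.

Lemma L5 (k : fieldType) : ~ beta -> reduced_cohom_zero k (PiXi R gens Pi) 0.
Proof.
move=> nb f hf.
case: (pickP (fun x => x \in Pi)) => [x0 hx0|hP]; last first.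
  exists (fun _ => 0) => S' [sub _]; rewrite add0r => -[] /eqP /cards1P [x ex].
  by move: sub; rewrite ex sub1set; move: (hP x) => /= ->.
have [a0 IP] : exists a0, forall x y z, x \in Pi -> z \in Pi ->
    (pos a0 x < pos a0 y)%N -> (pos a0 y < pos a0 z)%N -> y \in Pi.
  case: (pickP (fun z => z \notin Pi)) => [z hz|hall].
    by exists z; apply: interval.
  by exists x0 => x y z _ _ _ _; move/negbFE: (hall y).
have [xm hxm hmin] : exists2 xm, xm \in Pi & forall y, y \in Pi -> (pos a0 xm <= pos a0 y)%N.
  by case: (@arg_minnP _ x0 (mem Pi) (pos a0) hx0) => xm hxm hmin; exists xm.
have [elt helt] := elt_ex a0.
have claim : forall n x, x \in Pi -> pos a0 x = (pos a0 xm + n)%N -> f [set x] = f [set xm].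
  elim=> [|n IH] x hx hpx.
    by rewrite addn0 in hpx; rewrite (pos_inj hpx).
  have hlt : ((pos a0 x).-1 < r)%N by have := pos_ltr a0 x; lia.
  set y := elt (Ordinal hlt).
  have py : pos a0 y = (pos a0 xm + n)%N by rewrite /y helt /=; lia.
  have hy : y \in Pi.
    case: n IH hpx py => [|n] IH hpx py.
      by rewrite addn0 in py; rewrite (pos_inj py).
    by apply: (IP xm y x) => //; lia.
  have e1 := IH y hy py.
  have hX : in_Xi R gens [set y; x] by apply: (@CE a0); lia.
  have yx : y != x by apply/eqP => e; move: py hpx; rewrite e; lia.
  have hc : coboundary f [set y; x] = 0.
    apply: hf; first by split => //; apply/subsetP => w; rewrite in_set2 => /orP [] /eqP ->.
    by rewrite cards2 yx.
  rewrite -e1; apply/eqP; rewrite -subr_eq0; apply/eqP.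
  case: (ltngtP y x) => hyx.
  - by rewrite -hc cob2.
  - by rewrite setUC cob2 // in hc; rewrite -opprB hc oppr0.
  - by move: yx; rewrite (val_inj hyx) eqxx.
exists (fun _ => f [set xm]) => S' [sub _]; rewrite add0r => -[] /eqP /cards1P [x ex].
rewrite ex cob1; move: sub; rewrite ex sub1set => hx.
apply: (claim (pos a0 x - pos a0 xm)%N) => //.
by have := hmin x hx; lia.
Qed.

Lemma L3 : ~ beta -> alpha.
Proof.
move=> nb.
case: (pickP (fun x => x \in Pi)) => [x0 hx0|hP]; last first.
  exists m0 => i; split; first by move: (hP i) => /= ->.
  by move=> _; apply: m0_pos.
case: (pickP (fun z => z \notin Pi)) => [a0 ha0|hall]; last first.
  exists (- m0) => i; split; last by move: (hall i) => /= ->.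
  by move=> _; rewrite rpairN oppr_lt0; apply: m0_pos.
have IP := interval ha0 nb.
have [xm hxm hmin] : exists2 xm, xm \in Pi & forall y, y \in Pi -> (pos a0 xm <= pos a0 y)%N.
  by case: (@arg_minnP _ x0 (mem Pi) (pos a0) hx0) => xm hxm hmin; exists xm.
have [xM hxM hmax] : exists2 xM, xM \in Pi & forall y, y \in Pi -> (pos a0 y <= pos a0 xM)%N.
  by case: (@arg_maxnP _ x0 (mem Pi) (pos a0) hx0) => xM hxM hmax; exists xM.
have hp : (0 < pos a0 xm)%N by apply: pos_gt0; apply: contraNneq ha0 => <-.
have hpq : (pos a0 xm <= pos a0 xM)%N by apply: hmin.
have hqr := pos_ltr a0 xM.
have hS z : (z \in Pi) = (pos a0 xm <= pos a0 z <= pos a0 xM)%N.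
  apply/idP/idP => [hz|/andP [h1 h2]]; first by rewrite hmin ?hmax.
  case: (ltngtP (pos a0 xm) (pos a0 z)) h1 => // h1 _; last by rewrite -(pos_inj h1).
  case: (ltngtP (pos a0 z) (pos a0 xM)) h2 => // h2 _; last by rewrite (pos_inj h2).
  exact: (IP xm z xM).
have [elt helt] := elt_ex a0.
have r3' := r3.
have hl1 : ((pos a0 xm).-1 < r)%N by have := pos_ltr a0 xm; lia.
set y' := elt (Ordinal hl1).
have py' : pos a0 y' = (pos a0 xm).-1 by rewrite /y' helt.
have [x' hx'] : exists x', (pos a0 x' = (pos a0 xM).+1 /\ ((pos a0 xM).+1 < r)%N) \/
                            (pos a0 x' = 0%N /\ (pos a0 xM).+1 = r).
  case: (ltnP (pos a0 xM).+1 r) => h.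
    by exists (elt (Ordinal h)); left; rewrite helt.
  by exists a0; right; rewrite pos_a0; lia.
exists (- (cross (N xM) (N xm) + cross (N xM) (N y') + cross (N x') (N xm) + cross (N x') (N y'))).
move=> z.
have -> : rpair (- (cross (N xM) (N xm) + cross (N xM) (N y') + cross (N x') (N xm)
   + cross (N x') (N y'))) (N z) = - (dt xM xm z + dt xM y' z + dt x' xm z + dt x' y' z).
  by rewrite rpairN !rpairDl !rpair_cross.
have hz := pos_ltr a0 z.
rewrite hS; split => [/andP [h1 h2]|hout].
- rewrite oppr_lt0.
  have T1 : 0 <= dt xM xm z by rewrite dt_swap12 oppr_ge0; apply: (@W1 a0).
  have T2 : 0 <= dt xM y' z by rewrite dt_swap12 oppr_ge0; apply: (@W1 a0); lia.
  case: hx' => [[e1 e2]|[e1 e2]].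
  + have T3 : 0 <= dt x' xm z by rewrite dt_swap12 oppr_ge0; apply: (@W1 a0); lia.
    have T4 : 0 < dt x' y' z by rewrite dt_swap12 oppr_gt0; apply: (@S1 a0); lia.
    lra.
  + have T3 : 0 <= dt x' xm z by apply: (@W2 a0); [lia | right].
    have T4 : 0 <= dt x' y' z by apply: (@W2 a0); [lia | right; lia].
    case: (ltnP (pos a0 z) (pos a0 xM)) => h3.
      have T2' : 0 < dt xM y' z by rewrite dt_swap12 oppr_gt0; apply: (@S1 a0); lia.
      lra.
    case: (ltnP (pos a0 xm) (pos a0 xM)) => h4.
      have T3' : 0 < dt x' xm z by apply: (@S2 a0); [lia | right; lia].
      lra.
    have T4' : 0 < dt x' y' z by apply: (@S2 a0); [lia | right; lia].
    lra.
- rewrite oppr_gt0.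
  move: hout; rewrite negb_and -!ltnNge => hout.
  have T1 : dt xM xm z <= 0 by rewrite dt_swap12 oppr_le0; apply: (@W2 a0) => //; lia.
  have T2 : dt xM y' z <= 0 by rewrite dt_swap12 oppr_le0; apply: (@W2 a0); lia.
  case: hx' => [[e1 e2]|[e1 e2]].
  + have T3 : dt x' xm z <= 0 by rewrite dt_swap12 oppr_le0; apply: (@W2 a0); lia.
    have T4 : dt x' y' z <= 0 by rewrite dt_swap12 oppr_le0; apply: (@W2 a0); lia.
    case: (ltnP (pos a0 z) (pos a0 xm).-1) => h3.
      have T4' : dt x' y' z < 0 by rewrite dt_swap12 oppr_lt0; apply: (@S2 a0); lia.
      lra.
    case: (ltnP (pos a0 xM).+1 (pos a0 z)) => h4.
      have T4' : dt x' y' z < 0 by rewrite dt_swap12 oppr_lt0; apply: (@S2 a0); lia.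
      lra.
    case: (ltnP (pos a0 z) (pos a0 xm)) => h5.
      have T3' : dt x' xm z < 0 by rewrite dt_swap12 oppr_lt0; apply: (@S2 a0); lia.
      lra.
    have T2' : dt xM y' z < 0 by rewrite dt_swap12 oppr_lt0; apply: (@S2 a0); lia.
    lra.
  + have h0 : (pos a0 z < pos a0 xm)%N by lia.
    have T3 : dt x' xm z <= 0 by apply: (@W1 a0); lia.
    have T4 : dt x' y' z <= 0 by apply: (@W1 a0); lia.
    case: (ltnP (pos a0 z) (pos a0 xm).-1) => h3.
      have T2' : dt xM y' z < 0 by rewrite dt_swap12 oppr_lt0; apply: (@S2 a0); lia.
      lra.
    case: (posnP (pos a0 z)) => h4.
      have T1' : dt xM xm z < 0 by rewrite dt_swap12 oppr_lt0; apply: (@S2 a0); lia.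
      lra.
    have T3' : dt x' xm z < 0 by apply: (@S1 a0); lia.
    lra.
Qed.
End Main.
End Geo.

Unset Implicit Arguments.

Theorem mainTheorem10 (k : fieldType) (R : realType) (r : nat)
  (gens : 'I_r -> 'rV[int]_3) (nD : 'I_r -> int) (Pi : {set 'I_r}) :
  ray_data R gens ->
  let A := reduced_cohom_zero k (PiXi R gens Pi) 0 in
  let B := full_dim (@rec_cone_C_Pi R r gens Pi) in
  let C := bounded_set (@Css_Pi R r gens nD Pi) \/ empty_set (@Css_Pi R r gens nD Pi) in
  ((A /\ B) /\ ~ (~ A /\ C)) \/ (~ (A /\ B) /\ (~ A /\ C)).
Proof.
move=> RD A B C.
have AB : A -> B.
  move=> hA; apply: L4; apply: (L3 RD) => hb.
  exact: (L1 RD hb hA).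
have AC : ~ A -> C.
  move=> hA; left; apply: (L2 nD).
  apply: NNPP => hb; apply: hA; exact: (L5 RD hb).
case: (classic A) => hA.
  by left; split; [split; [exact: hA | exact: AB hA] | case].
by right; split; [case | split; [exact: hA | exact: AC hA]].
Qed.
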